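(* Let a product two-action game with $m$ players and characteristic tuple $(\underline v,\sigma^1,\dots,\sigma^m)$ be given. Let $\pi\in S_m$ with $F(\pi)\neq\emptyset$, and for $\underline\gamma\in EC(\pi)$ define the increment map $\mathrm{Inc}(\underline\gamma):F(\pi)\to\{0,1\}$ by $$\mathrm{Inc}(\underline\gamma,i):=\Bigl(1+\gamma^i+v_i+|L_0(\underline\gamma)\setminus\{i\}|+\sum_{j\in\mathcal A\setminus F(\pi)}\chi\bigl(\sigma^j(\pi(j)),\sigma^j(i)\bigr)\Bigr)\bmod 2,$$ where $\chi:\mathbb R\times\mathbb R\to\{0,1\}$ is given by $\chi(a,b)=1$ iff $a\ge b$. Then: (i) $\underline\gamma\in EC(\pi)$ is a Nash equilibrium if and only if $\mathrm{Inc}(\underline\gamma,i)=0$ for all $i\in F(\pi)$. (ii) Let $g(\pi)\in EC(\pi)$ be the point with $\gamma^i=1$ for all $i\in F(\pi)$. The map $\underline\gamma\mapsto\mathrm{Inc}(\underline\gamma)$ on $EC(\pi)$ takes only two values: the map $\mathrm{Inc}(g(\pi))$ and its opposite $i\mapsto (1+\mathrm{Inc}(g(\pi),i))\bmod 2$. Moreover $\mathrm{Inc}(\underline\gamma)=\mathrm{Inc}(g(\pi))$ if and only if $|L_0(\underline\gamma)|$ is even. (iii) Either $EC(\pi)$ contains no Nash equilibrium, or exactly half of its elements are Nash equilibria.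
   Context: Fix an integer $m\ge 1$ and $\mathcal A=\{1,\dots,m\}$. A two-action game is a finite game in normal form with player set $\mathcal A$ in which each player $i$ has exactly two pure strategies $s^i_0,s^i_1$, together with utility functions $U^i:S\to\mathbb R$, where $S=\prod_{i\in\mathcal A}\{s^i_0,s^i_1\}$. A mixed strategy combination is identified with $\underline\gamma=(\gamma^1,\dots,\gamma^m)\in[0,1]^m$, where $\gamma^i$ is the probability with which player $i$ plays $s^i_1$. The expected utility $V^i$ is the multilinear extension $V^i(\underline\gamma)=\sum_{(j_1,\dots,j_m)\in\{0,1\}^m}\prod_{k=1}^m p_k(j_k)\,U^i(s^1_{j_1},\dots,s^m_{j_m})$ with $p_k(1)=\gamma^k$, $p_k(0)=1-\gamma^k$. Write $\underline\gamma^{-i}=(\gamma^j)_{j\ne i}$ and $\lambda^i(\underline\gamma^{-i}):=V^i(\underline\gamma)|_{\gamma^i=1}-V^i(\underline\gamma)|_{\gamma^i=0}$. A Nash equilibrium is a point $\underline\gamma\in[0,1]^m$ such that for every $i$: $\lambda^i(\underline\gamma^{-i})=0$ if $0<\gamma^i<1$; $\lambda^i(\underline\gamma^{-i})\le 0$ if $\gamma^i=0$; $\lambda^i(\underline\gamma^{-i})\ge 0$ if $\gamma^i=1$. For $\underline\gamma$ put $L_0(\underline\gamma)=\{i:\gamma^i=0\}$, $L_1(\underline\gamma)=\{i:\gamma^i=1\}$, $L(\underline\gamma)=L_0(\underline\gamma)\cup L_1(\underline\gamma)$. A two-action game is a product two-action game if there exist $\underline v=(v_1,\dots,v_m)\in\{0,1\}^m$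 and numbers $a^i_j\in(0,1)$ for $i,j\in\mathcal A$, $i\ne j$, with $a^{i_1}_j\neq a^{i_2}_j$ whenever $i_1\neq i_2$ and both differ from $j$, such that $\lambda^i(\underline\gamma^{-i})=(-1)^{v_i}\prod_{j\in\mathcal A\setminus\{i\}}(\gamma^j-a^i_j)$ for every $i\in\mathcal A$. For $j\in\mathcal A$ the $j$-th associated permutation $\sigma^j\in S_m$ is the unique permutation with $\sigma^j(j)=j$ such that for $i,i'\in\mathcal A\setminus\{j\}$ one has $\sigma^j(i)<\sigma^j(i')$ iff $a^i_j>a^{i'}_j$. The tuple $(\underline v,\sigma^1,\dots,\sigma^m)$ is the characteristic tuple of the game. For $\pi\in S_m$, $F(\pi)=\{i\in\mathcal A:\pi(i)=i\}$ and $EC(\pi):=\{\underline\gamma\in[0,1]^m \mid L(\underline\gamma)=F(\pi),\ \gamma^j=a^{\pi(j)}_j \text{ for all } j\notin F(\pi)\}$. *)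

(* Defs.v *)
(* Two-action games with players 'I_m (player i of the paper
   is the ordinal i-1); pure strategy s^i_1 <-> true, s^i_0 <-> false. *)
From HB Require Import structures.
From mathcomp Require Import all_boot all_order all_algebra all_fingroup.
Set Implicit Arguments. Unset Strict Implicit. Unset Printing Implicit Defensive.
Import Order.TTheory GRing.Theory Num.Theory.
Local Open Scope ring_scope.

Section Game.
Variables (R : realFieldType) (m : nat).

Definition prob_of (g : {ffun 'I_m -> R}) (s : {ffun 'I_m -> bool}) : R :=
  \prod_(k < m) (if s k then g k else 1 - g k).

Definition Vexp (U : 'I_m -> {ffun 'I_m -> bool} -> R) (i : 'I_m)
  (g : {ffun 'I_m -> R}) : R :=
  \sum_(s : {ffun 'I_m -> bool}) prob_of g s * U i s.

Definition setc (g : {ffun 'I_m -> R}) (i : 'I_m) (x : R) : {ffun 'I_m -> R} :=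
  [ffun k => if k == i then x else g k].

Definition lambda U (i : 'I_m) (g : {ffun 'I_m -> R}) : R :=
  Vexp U i (setc g i 1) - Vexp U i (setc g i 0).

Definition in_cube (g : {ffun 'I_m -> R}) : bool := [forall i, 0 <= g i <= 1].

Definition is_NE U (g : {ffun 'I_m -> R}) : bool :=
  in_cube g &&
  [forall i, [&& (0 < g i < 1) ==> (lambda U i g == 0),
                 (g i == 0) ==> (lambda U i g <= 0) &
                 (g i == 1) ==> (0 <= lambda U i g)]].

(* a i j stands for a^i_j; the diagonal a i i is unused *)
Definition is_product_game U (v : 'I_m -> bool) (a : 'I_m -> 'I_m -> R) : Prop :=
  [/\ forall i j, i != j -> 0 < a i j < 1,
      forall j i1 i2, i1 != i2 -> i1 != j -> i2 != j -> a i1 j != a i2 j &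
      forall i g, in_cube g ->
        lambda U i g = (-1) ^+ v i * \prod_(j < m | j != i) (g j - a i j)].

Definition assoc_perm (a : 'I_m -> 'I_m -> R) (j : 'I_m) (s : 'S_m) : Prop :=
  s j = j /\
  forall i i', i != j -> i' != j -> (nat_of_ord (s i) < nat_of_ord (s i'))%N = (a i' j < a i j).

Definition Fix (p : 'S_m) : {set 'I_m} := [set i | p i == i].
Definition L0 (g : {ffun 'I_m -> R}) : {set 'I_m} := [set i | g i == 0].
Definition L1 (g : {ffun 'I_m -> R}) : {set 'I_m} := [set i | g i == 1].
Definition Lset g := L0 g :|: L1 g.

Definition EC (a : 'I_m -> 'I_m -> R) (p : 'S_m) (g : {ffun 'I_m -> R}) : bool :=
  [&& in_cube g, Lset g == Fix p &
      [forall j, (j \notin Fix p) ==> (g j == a (p j) j)]].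

Definition chi (x y : nat) : nat := (y <= x)%N.

(* Inc(g, i); g i is 0 or 1 for i in F(p), encoded as the boolean (g i == 1) *)
Definition Inc (v : 'I_m -> bool) (sigma : 'I_m -> 'S_m) (p : 'S_m)
  (g : {ffun 'I_m -> R}) (i : 'I_m) : nat :=
  ((1 + (g i == 1%R) + v i + #|L0 g :\ i|
    + \sum_(j < m | j \notin Fix p) chi (sigma j (p j)) (sigma j i)) %% 2)%N.

Definition gpt (a : 'I_m -> 'I_m -> R) (p : 'S_m) : {ffun 'I_m -> R} :=
  [ffun i => if i \in Fix p then 1 else a (p i) i].

End Game.

(* Main.v *)
Require Import Defs.
From HB Require Import structures.
From mathcomp Require Import all_boot all_order all_algebra all_fingroup.
Set Implicit Arguments. Unset Strict Implicit. Unset Printing Implicit Defensive.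
Import Order.TTheory GRing.Theory Num.Theory.
Local Open Scope ring_scope.

Lemma prod_sign (R : realDomainType) (I : finType) (P : pred I) (f : I -> R) :
  \prod_(j | P j) f j =
  (-1) ^+ (\sum_(j | P j) ((f j < 0)%R : nat))%N * \prod_(j | P j) `|f j|.
Proof.
rewrite (eq_bigr (fun j => (-1)^+(f j < 0)%R * `|f j|)); last by move=> j _; rewrite mulr_sign_norm.
rewrite big_split /=; congr (_ * _).
by rewrite (big_morph (fun n : nat => (-1)^+n : R) (@exprD R (-1)) (expr0 _)).
Qed.

Section Game.
Variables (R : realFieldType) (m : nat).
Variables (U : 'I_m -> {ffun 'I_m -> bool} -> R) (v : 'I_m -> bool)
  (a : 'I_m -> 'I_m -> R) (sigma : 'I_m -> 'S_m) (pi : 'S_m).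
Hypothesis PG : is_product_game U v a.
Hypothesis AP : forall j, assoc_perm a j (sigma j).

Lemma a01 i j : i != j -> 0 < a i j < 1.
Proof. by case: PG => H _ _; apply: H. Qed.

Lemma a_neq j i1 i2 : i1 != i2 -> i1 != j -> i2 != j -> a i1 j != a i2 j.
Proof. by case: PG => _ H _; apply: H. Qed.

Lemma lamE i g : in_cube g ->
  lambda U i g = (-1) ^+ v i * \prod_(j < m | j != i) (g j - a i j).
Proof. by case: PG => _ _ H; apply: H. Qed.

Lemma fixP j : (j \in Fix pi) = (pi j == j).
Proof. by rewrite inE. Qed.

Lemma pi_neq i j : i \in Fix pi -> j \notin Fix pi -> pi j != i.
Proof.
rewrite !fixP => /eqP fi nj; apply/eqP => e.
have ji : j = i by apply: (@perm_inj _ pi); rewrite e fi.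
by move: nj; rewrite ji fi eqxx.
Qed.

Lemma fix_neq i j : i \in Fix pi -> j \notin Fix pi -> j != i.
Proof. by move=> fi nj; apply/eqP => e; rewrite e fi in nj. Qed.

Section EC.
Variable g : {ffun 'I_m -> R}.
Hypothesis ECg : EC a pi g.

Lemma EC_cube : in_cube g.
Proof. by case/and3P: ECg. Qed.

Lemma EC_fix j : (j \in Fix pi) = (g j == 0) || (g j == 1).
Proof. by case/and3P: ECg => _ /eqP <- _; rewrite !inE. Qed.

Lemma EC_nfix j : j \notin Fix pi -> g j = a (pi j) j.
Proof.
move=> nj; case/and3P: ECg => _ _ H.
by move/forallP: H => /(_ j); rewrite nj => /eqP.
Qed.

Lemma EC_L0 j : (j \in L0 g) = (j \in Fix pi) && (g j == 0).
Proof. by rewrite inE EC_fix; case: eqP => _; rewrite ?andbT ?andbF. Qed.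

Variable i : 'I_m.
Hypothesis Fi : i \in Fix pi.

Definition Sfix := (\sum_(j < m | j \notin Fix pi) chi (sigma j (pi j)) (sigma j i))%N.

Lemma count_neg :
  (\sum_(j < m | j != i) (((g j - a i j) < 0)%R : nat))%N = (#|L0 g :\ i| + Sfix)%N.
Proof.
rewrite /Sfix -sum1_card big_mkcond [X in (_ = X + _)%N]big_mkcond.
rewrite [X in (_ = _ + X)%N]big_mkcond -big_split /=.
apply: eq_bigr => j _.
case Fj: (j \in Fix pi) => /=.
  rewrite addn0 !inE.
  case: (eqVneq j i) => [->|ji] //=.
  have /andP[a0 a1] : 0 < a i j < 1 by apply: a01; rewrite eq_sym.
  move: (EC_fix j); rewrite Fj => /esym /orP [] /eqP ->.
    by rewrite eqxx sub0r oppr_lt0 a0.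
  by rewrite oner_eq0 subr_lt0 ltNge (ltW a1).
have nj : j \notin Fix pi by rewrite Fj.
rewrite ifT; last exact: fix_neq Fi nj.
have -> : (j \in L0 g :\ i) = false by rewrite in_setD1 EC_L0 Fj andbF.
rewrite add0n.
rewrite EC_nfix // subr_lt0 /chi leq_eqVlt.
have pjj : pi j != j by rewrite fixP in Fj; rewrite Fj.
have ij : i != j by rewrite eq_sym; exact: fix_neq Fi nj.
case: (AP j) => _ -> //.
have -> : (nat_of_ord (sigma j i) == sigma j (pi j)) = false.
  apply/negbTE/eqP => /ord_inj /perm_inj e.
  by move: (pi_neq Fi nj); rewrite e eqxx.
by [].
Qed.

Lemma fac_nz j : j != i -> g j - a i j != 0.
Proof.
move=> ji; rewrite subr_eq0.
case Fj: (j \in Fix pi).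
  have /andP[a0 a1] : 0 < a i j < 1 by apply: a01; rewrite eq_sym.
  move: (EC_fix j); rewrite Fj => /esym /orP [] /eqP ->.
    by rewrite eq_sym (gt_eqF a0).
  by rewrite (gt_eqF a1).
have nj : j \notin Fix pi by rewrite Fj.
rewrite EC_nfix //; apply: a_neq.
- exact: pi_neq Fi nj.
- by rewrite fixP in Fj; rewrite Fj.
- by rewrite eq_sym.
Qed.

Lemma cond_fix :
  [&& (0 < g i < 1) ==> (lambda U i g == 0),
      (g i == 0) ==> (lambda U i g <= 0) &
      (g i == 1) ==> (0 <= lambda U i g)] = (Inc v sigma pi g i == 0%N).
Proof.
set N := (#|L0 g :\ i| + Sfix)%N.
have [Q Qgt0 lamE'] : exists2 Q, 0 < Q & lambda U i g = (-1)^+(v i + N) * Q.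
  exists (\prod_(j < m | j != i) `|g j - a i j|).
    by apply: prodr_gt0 => j ji; rewrite normr_gt0; exact: fac_nz.
  by rewrite lamE ?EC_cube // prod_sign count_neg mulrA -exprD.
have h01 : ((0:R) == 1) = false by rewrite eq_sym oner_eq0.
rewrite /Inc -/Sfix lamE' -signr_odd modn2 /N.
move: (EC_fix i); rewrite Fi => /esym /orP [] /eqP ->.
  rewrite ltxx eqxx h01 /= !oddD.
  case: (v i); case: (odd #|_|); case: (odd Sfix) => /=;
  by rewrite ?expr0 ?expr1 ?mul1r ?mulN1r ?oppr_le0 ?(lt_geF Qgt0) ?(ltW Qgt0).
rewrite ltxx andbF eqxx oner_eq0 /= !oddD.
case: (v i); case: (odd #|_|); case: (odd Sfix) => /=;
by rewrite ?expr0 ?expr1 ?mul1r ?mulN1r ?oppr_ge0 ?(lt_geF Qgt0) ?(ltW Qgt0).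
Qed.
End EC.

Lemma cond_nfix g j : EC a pi g -> j \notin Fix pi ->
  [&& (0 < g j < 1) ==> (lambda U j g == 0),
      (g j == 0) ==> (lambda U j g <= 0) &
      (g j == 1) ==> (0 <= lambda U j g)].
Proof.
move=> ECg nj.
have -> : lambda U j g = 0.
  rewrite lamE ?(EC_cube ECg) //.
  set k := (pi^-1)%g j.
  have pk : pi k = j by rewrite /k permKV.
  have kj : k != j.
    by apply/eqP => e; move: pk nj; rewrite e fixP => ->; rewrite eqxx.
  have nk : k \notin Fix pi.
    by rewrite fixP pk eq_sym.
  rewrite (bigD1 k) //= (EC_nfix ECg) // pk subrr mul0r mulr0 //.
by rewrite eqxx lexx !implybT.
Qed.

Lemma NE_iff g : EC a pi g -> is_NE U g <-> forall i, i \in Fix pi -> Inc v sigma pi g i = 0%N.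
Proof.
move=> ECg; rewrite /is_NE (EC_cube ECg) /=; split.
  by move/forallP => H k Fk; apply/eqP; rewrite -(cond_fix ECg Fk); exact: H.
move=> H; apply/forallP => k; case Fk: (k \in Fix pi).
  by rewrite (cond_fix ECg Fk) H.
by apply: cond_nfix; rewrite ?Fk.
Qed.

Lemma gptE i : gpt a pi i = if i \in Fix pi then 1 else a (pi i) i.
Proof. by rewrite ffunE. Qed.

Lemma EC_gpt : EC a pi (gpt a pi).
Proof.
have nf i : i \notin Fix pi -> 0 < a (pi i) i < 1.
  by move=> ni; apply: a01; rewrite fixP in ni.
apply/and3P; split.
- apply/forallP => i; rewrite gptE; case: ifP => Fi; first by rewrite ler01 lexx.
  by case/andP: (nf i (negbT Fi)) => h1 h2; rewrite (ltW h1) (ltW h2).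
- apply/eqP/setP => i; rewrite !inE gptE fixP.
  case: ifP => Fi; first by rewrite eqxx orbT.
  have Fi' : i \notin Fix pi by rewrite fixP Fi.
  case/andP: (nf i Fi') => h1 h2.
  by rewrite (gt_eqF h1) (lt_eqF h2).
- apply/forallP => j; apply/implyP => nj; by rewrite gptE (negbTE nj).
Qed.

Lemma L0_gpt : L0 (gpt a pi) = set0.
Proof.
apply/setP => i; rewrite !inE gptE; case: ifP => Fi; first by rewrite oner_eq0.
have /andP[h1 _] : 0 < a (pi i) i < 1 by apply: a01; rewrite -fixP Fi.
by rewrite (gt_eqF h1).
Qed.

Lemma Inc_rel g i : EC a pi g -> i \in Fix pi ->
  Inc v sigma pi g i = odd (#|L0 g| + Inc v sigma pi (gpt a pi) i).
Proof.
move=> ECg Fi.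
rewrite /Inc !modn2 L0_gpt set0D cards0 gptE Fi eqxx.
rewrite (cardsD1 i (L0 g)) (EC_L0 ECg) Fi /=.
move: (EC_fix ECg i); rewrite Fi => /esym /orP [] /eqP ->.
  rewrite eqxx eq_sym oner_eq0 /= !oddD /=.
  by case: (v i); case: (odd #|_|); case: (odd (\sum_(j < m | _) _)).
rewrite oner_eq0 eqxx /= !oddD /=.
by case: (v i); case: (odd #|_|); case: (odd (\sum_(j < m | _) _)).
Qed.
End Game.

Lemma half_parity (T : finType) (F : {set T}) (x : T) (c : bool) : x \in F ->
  ((#|[set A in powerset F | odd #|A| == c]|).*2 = #|powerset F|)%N.
Proof.
move=> xF.
set P := [set A in powerset F | odd #|A| == c].
set Q := [set A in powerset F | odd #|A| != c].
pose t (A : {set T}) := if x \in A then A :\ x else x |: A.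
have tK : involutive t.
  move=> A; case xA: (x \in A).
    by rewrite /t xA !inE eqxx /= setD1K.
  by rewrite /t xA setU11 setU1K ?xA.
have tinj := inv_inj tK.
have tpar (A : {set T}) : odd #|t A| = ~~ odd #|A|.
  rewrite /t; case: ifP => xA.
    by rewrite [#|A|](cardsD1 x A) xA add1n /= negbK.
  by rewrite cardsU1 xA add1n.
have tsub (A : {set T}) : A \subset F -> t A \subset F.
  rewrite /t; case: ifP => _ AF.
    exact: subset_trans (subsetDl _ _) AF.
  by rewrite subUset sub1set xF AF.
have PQ : t @: P \subset Q.
  apply/subsetP => B /imsetP [A AP ->]; move: AP; rewrite !inE ?powersetE.
  by case/andP => AF /eqP Ac; rewrite tsub //= tpar Ac; case: (c).
have QP : t @: Q \subset P.
  apply/subsetP => B /imsetP [A AP ->]; move: AP; rewrite !inE ?powersetE.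
  case/andP => AF Ac; rewrite tsub //= tpar.
  by move: Ac; case: (c); case: (odd #|A|).
have e1 : (#|P| <= #|Q|)%N by rewrite -(card_imset _ tinj); apply: subset_leq_card.
have e2 : (#|Q| <= #|P|)%N by rewrite -(card_imset _ tinj); apply: subset_leq_card.
have eQ : #|Q| = #|P| by apply/eqP; rewrite eqn_leq e1 e2.
rewrite -addnn -{2}eQ -(cardsID [set A : {set T} | odd #|A| == c] (powerset F)).
by congr (_ + _)%N; apply: eq_card => A; rewrite !inE // andbC.
Qed.

Lemma count_set (T : finType) (X : {set T}) (p : pred T) :
  count p (enum X) = #|[set A in X | p A]|.
Proof.
have -> : [set A in X | p A] = X :&: [set A | p A] by apply/setP => A; rewrite !inE.
rewrite cardE (perm_size (enum_setI _ _)) size_filter.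
by apply: eq_count => A; rewrite inE.
Qed.

Lemma IncB (R : realFieldType) (m : nat) (v : 'I_m -> bool) (sigma : 'I_m -> 'S_m)
  (pi : 'S_m) (x : {ffun 'I_m -> R}) i :
  Inc v sigma pi x i = odd (Inc v sigma pi x i).
Proof. by rewrite /Inc modn2 oddb. Qed.

Unset Implicit Arguments.
Set Strict Implicit.
Theorem theorem3p7 (R : realFieldType) (m : nat)
  (U : 'I_m -> {ffun 'I_m -> bool} -> R) (v : 'I_m -> bool)
  (a : 'I_m -> 'I_m -> R) (sigma : 'I_m -> 'S_m) (pi : 'S_m) :
  (0 < m)%N ->
  is_product_game U v a ->
  (forall j, assoc_perm a j (sigma j)) ->
  Fix pi != set0 ->
  [/\ (* (i) *)
      forall g, EC a pi g ->
        (is_NE U g <-> forall i, i \in Fix pi -> Inc v sigma pi g i = 0%N),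
      (* (ii) *)
      EC a pi (gpt a pi) /\
      (forall g, EC a pi g ->
        ((forall i, i \in Fix pi -> Inc v sigma pi g i = Inc v sigma pi (gpt a pi) i)
         \/ (forall i, i \in Fix pi ->
               Inc v sigma pi g i = ((1 + Inc v sigma pi (gpt a pi) i) %% 2)%N)) /\
        ((forall i, i \in Fix pi -> Inc v sigma pi g i = Inc v sigma pi (gpt a pi) i)
         <-> ~~ odd #|L0 g|)) &
      (* (iii) : EC(pi) is finite, and either has no NE or exactly half are NE *)
      exists s : seq {ffun 'I_m -> R},
        [/\ uniq s, (forall g, (g \in s) = EC a pi g) &
            ~~ has (is_NE U) s \/ ((count (is_NE U) s).*2 = size s)%N]].
Proof.
move=> m0 PG AP Fne.
have HR g i := @Inc_rel R m U v a sigma pi PG g i.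
split.
- by move=> g ECg; have := NE_iff PG AP ECg.
- split; first exact: EC_gpt PG.
  move=> g ECg; split.
    case Lp: (odd #|L0 g|); [right|left] => i Fi; rewrite (HR _ _ ECg Fi) oddD Lp.
      by rewrite modn2 oddD.
    by rewrite /= -IncB.
  split.
    move=> H; case/set0Pn: Fne => i0 Fi0; move: (H i0 Fi0).
    rewrite (HR _ _ ECg Fi0) oddD {2}(IncB v sigma pi (gpt a pi) i0).
    by case: (odd #|_|); case: (odd (Inc _ _ _ _ _)).
  move=> Le i Fi; by rewrite (HR _ _ ECg Fi) oddD (negbTE Le) /= -IncB.
pose mk (A : {set 'I_m}) : {ffun 'I_m -> R} :=
  [ffun i => if i \in Fix pi then (if i \in A then 0 else 1) else a (pi i) i].
have nf i : i \notin Fix pi -> 0 < a (pi i) i < 1.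
  by move=> ni; apply: (a01 PG); rewrite inE in ni.
have mkEC (A : {set 'I_m}) : A \subset Fix pi -> EC a pi (mk A).
  move=> AF; apply/and3P; split.
  - apply/forallP => i; rewrite ffunE; case: ifP => Fi.
      by case: ifP => _; rewrite ?lexx ?ler01.
    by case/andP: (nf i (negbT Fi)) => h1 h2; rewrite (ltW h1) (ltW h2).
  - apply/eqP/setP => i; rewrite !inE ffunE.
    case: ifP => Fi; have Fi2 := Fi; rewrite inE in Fi2; rewrite Fi2.
      by case: ifP => _; rewrite ?eqxx ?orbT ?oner_eq0.
    have Fi' : i \notin Fix pi by rewrite Fi.
    by case/andP: (nf i Fi') => h1 h2; rewrite (gt_eqF h1) (lt_eqF h2).
  - apply/forallP => j; apply/implyP => nj; by rewrite ffunE (negbTE nj).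
have L0mk (A : {set 'I_m}) : A \subset Fix pi -> L0 (mk A) = A.
  move=> AF; apply/setP => i; rewrite inE ffunE.
  case: ifP => Fi.
    by case: ifP => _; rewrite ?eqxx ?oner_eq0.
  have Fi' : i \notin Fix pi by rewrite Fi.
  case/andP: (nf i Fi') => h1 h2; rewrite (gt_eqF h1).
  by apply/esym/negbTE; apply: contra Fi'; apply: (subsetP AF).
have mkinj : {in powerset (Fix pi) &, injective mk}.
  move=> A B; rewrite !powersetE => AF BF e.
  by rewrite -(L0mk A AF) e L0mk.
exists [seq mk A | A <- enum (powerset (Fix pi))]; split.
- rewrite map_inj_in_uniq ?enum_uniq //; move=> A B; rewrite !mem_enum; exact: mkinj.
- move=> g; apply/mapP/idP.
    by case=> A; rewrite mem_enum powersetE => AF ->; exact: mkEC.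
  move=> ECg; exists (L0 g).
    rewrite mem_enum powersetE; apply/subsetP => i.
    by rewrite (EC_L0 ECg) => /andP[].
  apply/ffunP => i; rewrite ffunE (EC_L0 ECg); case Fi: (i \in Fix pi) => /=.
    move: (EC_fix ECg i); rewrite Fi => /esym /orP [] /eqP ->;
    by rewrite ?eqxx ?oner_eq0.
  by apply: (EC_nfix ECg); rewrite Fi.
case: (boolP (has (is_NE U) _)) => [/hasP [g0 /mapP [A0 A0in ->] NE0] | ]; last by left.
right.
rewrite size_map -cardE count_map.
case/set0Pn: Fne => i0 Fi0.
have A0F : A0 \subset Fix pi by rewrite mem_enum powersetE in A0in.
have key A : A \in enum (powerset (Fix pi)) ->
    preim mk (is_NE U) A = (odd #|A| == odd #|A0|).
  rewrite mem_enum powersetE => AF.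
  rewrite [preim _ _ _]/=.
  have HA := NE_iff PG AP (mkEC A AF).
  have H0 := NE_iff PG AP (mkEC A0 A0F).
  move/H0: NE0 => NE0.
  apply/idP/eqP.
    move/HA => /(_ i0 Fi0); move: (NE0 i0 Fi0).
    rewrite (HR _ _ (mkEC A AF) Fi0) (HR _ _ (mkEC A0 A0F) Fi0).
    rewrite (L0mk A AF) (L0mk A0 A0F) !oddD.
    by case: (odd #|A|); case: (odd #|A0|); case: (odd (Inc _ _ _ _ _)).
  move=> e; apply/HA => i Fi; move: (NE0 i Fi).
  rewrite (HR _ _ (mkEC A AF) Fi) (HR _ _ (mkEC A0 A0F) Fi).
  by rewrite (L0mk A AF) (L0mk A0 A0F) !oddD e.
rewrite (eq_in_count key) count_set.
exact: half_parity Fi0.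
Qed.
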